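(* Let $T$ be a doubled graph with good partition $(X,Y)$. (1) If $\{y\}$ is an anticomponent of size one of $T|Y$ and $y$ has an antineighbor $x\in X$, then $\{x,y\}$ is an even pair of $T$; in particular, if in addition $T|X$ has an edge $x_1x_2$, then one of $\{x_1,y\}$, $\{x_2,y\}$ is an even pair, so $T$ has an even pair. (2) If $T|Y$ has a strong antiedge $y_1y_2$ and $T|X$ has no edge, then $\{y_1,y_2\}$ is an even pair of $T$.
   Context: A trigraph $T$ consists of a finite set $V(T)$ and a map $\theta:\binom{V(T)}{2}\to\{-1,0,1\}$. Two distinct vertices $u,v$ are strongly adjacent if $\theta(uv)=1$, strongly antiadjacent if $\theta(uv)=-1$, and semiadjacent (a switchable pair) if $\theta(uv)=0$; they are adjacent if $\theta(uv)\in\{0,1\}$ and antiadjacent if $\theta(uv)\in\{0,-1\}$; an antineighbor of $v$ is a vertex antiadjacent to $v$. An edge (antiedge) is an adjacent (antiadjacent) pair; a strong edge (strong antiedge) is a strongly adjacent (strongly antiadjacent) pair. For $X\subseteq V(T)$, $T|X$ is the trigraph on $X$ with $\theta$ restricted. A set $X$ is connected if the graph on $X$ whose edges are the adjacent pairs is connected, and anticonnected if the graph on $X$ whose edges are the antiadjacent pairs is connected; components (anticomponents) are maximal connected (anticonnected) subsets. A path is a sequence of distinct vertices $p_1,\dots,p_k$ such that $p_i,p_j$ are adjacent when $|i-j|=1$ and antiadjacent when $|i-j|>1$; its length is $k-1$. An even pair of $T$ is a strongly antiadjacent pair $\{u,v\}$ such that every path from $u$ to $v$ in $T$ has even length. A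 good partition of $T$ is a partition $(X,Y)$ of $V(T)$ such that every component of $T|X$ and every anticomponent of $T|Y$ has at most two vertices, no switchable pair has one end in $X$ and the other in $Y$, and for every component $C_x$ of $T|X$ and every anticomponent $C_y$ of $T|Y$, every vertex of $C_x\cup C_y$ is incident with at most one strong edge and at most one strong antiedge between $C_x$ and $C_y$. $T$ is a doubled graph if it has a good partition. *)

(* Defs.v *)
From HB Require Import structures.
From mathcomp Require Import all_boot.
Set Implicit Arguments. Unset Strict Implicit. Unset Printing Implicit Defensive.

(* A trigraph on a finite vertex type V is a symmetric map
   th : V -> V -> tri (values on the diagonal are irrelevant):
   SAdj = theta 1, Semi = theta 0, SAnti = theta -1. *)
Inductive tri := SAdj | Semi | SAnti.

Definition tri_eqb (a b : tri) : bool :=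
  match a, b with
  | SAdj, SAdj | Semi, Semi | SAnti, SAnti => true | _, _ => false end.
Lemma tri_eqP : Equality.axiom tri_eqb.
Proof. by case; case; constructor. Qed.
HB.instance Definition _ := hasDecEq.Build tri tri_eqP.

Section Trigraph.
Variables (V : finType) (th : V -> V -> tri).

Definition strongly_adj (u v : V) : bool := (u != v) && (th u v == SAdj).
Definition strongly_anti (u v : V) : bool := (u != v) && (th u v == SAnti).
Definition semiadj (u v : V) : bool := (u != v) && (th u v == Semi).
Definition adjacent (u v : V) : bool := (u != v) && (th u v != SAnti).
Definition antiadjacent (u v : V) : bool := (u != v) && (th u v != SAdj).

Definition adj_in (X : {set V}) : rel V :=
  fun a b => [&& a \in X, b \in X & adjacent a b].
Definition anti_in (X : {set V}) : rel V :=
  fun a b => [&& a \in X, b \in X & antiadjacent a b].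

Definition comp (X : {set V}) (x : V) : {set V} := [set z | connect (adj_in X) x z].
Definition acomp (Y : {set V}) (y : V) : {set V} := [set z | connect (anti_in Y) y z].

Definition between (C D : {set V}) (v w : V) : bool :=
  ((v \in C) && (w \in D)) || ((v \in D) && (w \in C)).

Definition good_partition (X Y : {set V}) : Prop :=
  [/\ X :&: Y = set0 /\ X :|: Y = setT,
      (forall x, x \in X -> #|comp X x| <= 2),
      (forall y, y \in Y -> #|acomp Y y| <= 2),
      (forall x y, x \in X -> y \in Y -> ~~ semiadj x y) &
      (forall x y, x \in X -> y \in Y ->
         forall v, v \in comp X x :|: acomp Y y ->
           #|[set w | between (comp X x) (acomp Y y) v w && strongly_adj v w]| <= 1 /\
           #|[set w | between (comp X x) (acomp Y y) v w && strongly_anti v w]| <= 1)].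

Definition doubled_graph : Prop := exists X Y, good_partition X Y.

(* a path from u to v: a sequence p_1 = u, ..., p_k = v of distinct vertices,
   consecutive ones adjacent, non-consecutive ones antiadjacent.
   (the default u of nth is irrelevant: all indices are in range) *)
Definition is_path_between (u v : V) (s : seq V) : Prop :=
  [/\ s != [::], head u s = u, last u s = v, uniq s &
      forall i j, i < j -> j < size s ->
        (j = i.+1 -> adjacent (nth u s i) (nth u s j)) /\
        (i.+1 < j -> antiadjacent (nth u s i) (nth u s j))].

Definition path_length (s : seq V) : nat := (size s).-1.

Definition even_pair (u v : V) : Prop :=
  strongly_anti u v /\
  forall s, is_path_between u v s -> ~~ odd (path_length s).
End Trigraph.

(* Main.v *)
Require Import Defs.
From mathcomp Require Import all_boot zify.

Lemma card2 (T : finType) (A : {set T}) a b :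
  a != b -> a \in A -> b \in A -> 1 < #|A|.
Proof.
move=> ab aA bA.
have: [set a; b] \subset A by apply/subsetP=> z; rewrite !inE => /orP[] /eqP->.
by move/subset_leq_card; rewrite cards2 ab.
Qed.

Lemma card3 (T : finType) (A : {set T}) a b c :
  a != b -> a != c -> b != c -> a \in A -> b \in A -> c \in A -> 2 < #|A|.
Proof.
move=> ab ac bc aA bA cA.
have: [set a; b; c] \subset A by apply/subsetP=> z; rewrite !inE => /orP[/orP[]|] /eqP->.
move/subset_leq_card; rewrite -setUA cardsU1 cards2 !inE negb_or ab ac bc.
by [].
Qed.

Lemma path4 (V : finType) (th : V -> V -> tri) u v s :
  strongly_anti th u v -> is_path_between th u v s -> odd (path_length s) ->
  exists p2 p3, [/\ adjacent th u p2, adjacent th p2 p3, antiadjacent th p2 v,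
    antiadjacent th u p3 & [/\ p2 != u, p2 != v, p3 != u, p3 != v & p2 != p3]].
Proof.
move=> sa [s0 hd lst un P]; rewrite /path_length => od.
have h0 : nth u s 0 = u by rewrite nth0.
have hk : nth u s (size s).-1 = v by rewrite nth_last.
have k1 : 0 < size s by rewrite lt0n size_eq0.
have k2 : (size s != 2).
  apply/eqP=> e; have [/(_ erefl) + _] := P 0 1 erefl ltac:(by rewrite e).
  move: sa; rewrite h0 -hk e /= /adjacent /strongly_anti => /andP[_ /eqP->].
  by rewrite andbF.
have k4 : 3 < size s.
  case: (size s) k1 k2 od => [|[|[|[|n]]]] //.
exists (nth u s 1), (nth u s 2).
have nq : forall i j, i < size s -> j < size s -> i != j -> nth u s i != nth u s j.
  by move=> i j hi hj; rewrite nth_uniq.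
have [/(_ erefl) a01 _] := P 0 1 erefl ltac:(lia).
have [/(_ erefl) a12 _] := P 1 2 erefl ltac:(lia).
have [_ /(_ ltac:(lia)) a1k] := P 1 (size s).-1 ltac:(lia) ltac:(lia).
have [_ /(_ ltac:(lia)) a02] := P 0 2 erefl ltac:(lia).
rewrite h0 hk in a01 a1k a02.
split=> //; split.
- by rewrite -{2}h0 nq //; lia.
- by rewrite -hk nq //; lia.
- by rewrite -{2}h0 nq //; lia.
- by rewrite -hk nq //; lia.
- by rewrite nq //; lia.
Qed.

Theorem proposition4p10 (V : finType) (th : V -> V -> tri)
  (thC : forall u v, th u v = th v u) (X Y : {set V}) :
  good_partition th X Y ->
  (* (1) *)
  (forall y, y \in Y -> acomp th Y y = [set y] ->
     (forall x, x \in X -> antiadjacent th x y -> even_pair th x y) /\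
     (forall x1 x2, x1 \in X -> x2 \in X -> adjacent th x1 x2 ->
        (even_pair th x1 y \/ even_pair th x2 y) /\
        (exists u v, even_pair th u v))) /\
  (* (2) *)
  (forall y1 y2, y1 \in Y -> y2 \in Y -> strongly_anti th y1 y2 ->
     (forall a b, a \in X -> b \in X -> ~~ adjacent th a b) ->
     even_pair th y1 y2).
Proof.
move=> [[dis cov] cX cY nsemi c5].
have XY : forall v, (v \in X) || (v \in Y).
  by move=> v; rewrite -in_setU cov in_setT.
have neq : forall a b, a \in X -> b \in Y -> a != b.
  move=> a b aX bY; apply/eqP=> e; subst b.
  by have := in_set0 a; rewrite -dis inE aX bY.
have adjC : forall a b, adjacent th a b -> adjacent th b a.
  by move=> a b; rewrite /adjacent thC eq_sym.
have antiC : forall a b, antiadjacent th a b -> antiadjacent th b a.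
  by move=> a b; rewrite /antiadjacent thC eq_sym.
have santi : forall a b, a \in X -> b \in Y -> antiadjacent th a b -> th a b = SAnti.
  move=> a b aX bY /andP[ab]; have := nsemi a b aX bY.
  by rewrite /semiadj ab /=; case: (th a b).
have nsym : forall a b : V, a != b -> b != a.
  by move=> a b ab; apply/eqP=> e; move: ab; rewrite e eqxx.
have inA : forall y, y \in Y -> y \in acomp th Y y by move=> y _; rewrite inE connect0.
have inC : forall x, x \in X -> x \in Defs.comp th X x by move=> x _; rewrite inE connect0.
have part1 : forall y, y \in Y -> acomp th Y y = [set y] ->
     forall x, x \in X -> antiadjacent th x y -> even_pair th x y.
  move=> y yY ay x xX axy.
  have sxy : strongly_anti th x y by rewrite /strongly_anti neq //= santi.
  split=> // s ps; apply/negP=> od.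
  have [p2 [p3 [a12 _ a2y _ [n2u n2y _ _ _]]]] := path4 _ _ _ _ _ sxy ps od.
  have p2X : p2 \in X.
    case/orP: (XY p2) => // p2Y.
    have : p2 \in acomp th Y y by rewrite inE; apply: connect1; rewrite /anti_in yY p2Y antiC.
    by rewrite ay inE (negPf n2y).
  have p2c : p2 \in Defs.comp th X x.
    by rewrite inE; apply: connect1; rewrite /adj_in xX p2X.
  have [_] := c5 x y xX yY y ltac:(by rewrite in_setU inA ?orbT).
  apply/negP; rewrite -ltnNge; apply: (@card2 _ _ x p2).
  all: rewrite ?inE /between.
  - exact: nsym.
  - rewrite inA // inC // orbT /=; apply/andP; split; first exact: (nsym _ _ (neq _ _ xX yY)).
    by rewrite thC santi.
  - rewrite inA // p2c orbT /=; apply/andP; split; first exact: (nsym _ _ (neq _ _ p2X yY)).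
    by rewrite thC santi // antiC.
split.
  move=> y yY ay; split; first exact: part1.
  move=> x1 x2 x1X x2X a12.
  suff H : even_pair th x1 y \/ even_pair th x2 y.
    by split=> //; case: H => H; [exists x1, y | exists x2, y].
  have x2c : x2 \in Defs.comp th X x1.
    by rewrite inE; apply: connect1; rewrite /adj_in x1X x2X.
  case A1: (antiadjacent th x1 y); first by left; apply: part1.
  case A2: (antiadjacent th x2 y); first by right; apply: part1.
  exfalso.
  have sa : forall a, a \in X -> antiadjacent th a y = false -> th y a = SAdj.
    move=> a aX; rewrite /antiadjacent neq //= thC.
    by case: (th y a).
  have [+ _] := c5 x1 y x1X yY y ltac:(by rewrite in_setU inA ?orbT).
  apply/negP; rewrite -ltnNge; apply: (@card2 _ _ x1 x2).
  - by case/andP: a12.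
  - rewrite !inE /between inA // inC // orbT /=; apply/andP; split; first exact: (nsym _ _ (neq _ _ x1X yY)).
    by rewrite sa.
  - rewrite !inE /between inA // x2c orbT /=; apply/andP; split; first exact: (nsym _ _ (neq _ _ x2X yY)).
    by rewrite sa.
move=> y1 y2 y1Y y2Y s12 noX; split=> // s ps; apply/negP=> od.
have [p2 [p3 [a12 a23 a2y a1p3 [n2u n2y n3u n3y n23]]]] := path4 _ _ _ _ _ s12 ps od.
have a12' : antiadjacent th y1 y2.
  by case/andP: s12 => ne /eqP e; rewrite /antiadjacent ne e.
case/orP: (XY p2) => [p2X|p2Y].
  case/orP: (XY p3) => [p3X|p3Y]; first by move: (noX _ _ p2X p3X); rewrite a23.
  have := cY _ y1Y; apply/negP; rewrite -ltnNge.
  apply: (@card3 _ _ y1 y2 p3).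
  - by case/andP: s12.
  - exact: nsym.
  - exact: nsym.
  - exact: inA.
  - by rewrite inE; apply: connect1; rewrite /anti_in y1Y y2Y.
  - by rewrite inE; apply: connect1; rewrite /anti_in y1Y p3Y.
have := cY _ y2Y; apply/negP; rewrite -ltnNge.
apply: (@card3 _ _ y2 y1 p2).
- by case/andP: s12 => /nsym.
- exact: nsym.
- exact: nsym.
- exact: inA.
- by rewrite inE; apply: connect1; rewrite /anti_in y1Y y2Y antiC.
- by rewrite inE; apply: connect1; rewrite /anti_in y2Y p2Y antiC.
Qed.
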